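(* For every integer $n \geq 1$ there is an MSyDS $\mathcal{S}_n$ with two layers and $n$ nodes, in which every local function is a threshold function and every master function is a symmetric Boolean function, such that: the phase space of $\mathcal{S}_n$ contains exactly one cycle, this cycle has length $n+1$, and every transient has length one (i.e., every configuration not on this cycle has its successor on the cycle).
   Context: A multilayer synchronous dynamical system (MSyDS) $\mathcal{S}$ over $\mathbb{B}=\{0,1\}$ with $k\ge 1$ layers consists of: a finite node set $V$ with $n$ nodes; undirected simple graphs $G_i=(V,E_i)$, $1\le i\le k$ (all layers share the node set $V$, edge sets may differ); for each layer $i$ and node $v$ a local function $f_{i,v}$ with output in $\mathbb{B}$ whose inputs are the states of the nodes in the closed neighborhood of $v$ in $G_i$ (namely $v$ and its neighbors in $G_i$); and for each node $v$ a master function $\psi_v:\mathbb{B}^k\to\mathbb{B}$. A configuration is a map $\mathcal{C}:V\to\mathbb{B}$. The successor of $\mathcal{C}$ is the configuration $\mathcal{C}'$ with $\mathcal{C}'(v)=\psi_v(f_{1,v}(\mathcal{C}),\dots,f_{k,v}(\mathcal{C}))$ for every $v$ (synchronous update), where $f_{i,v}(\mathcal{C})$ denotes $f_{i,v}$ evaluated on the states in $\mathcal{C}$ of the closed neighborhood of $v$ in $G_i$. The phase space of $\mathcal{S}$ is the directed graph whose vertices are the $2^n$ configurations, with an arc from each configuration to its successor. A transient is a directed path in the phase space leading to a cycle. For an integer $\tau\ge 0$, the $\tau$-threshold function is the Boolean function that equals 1 iff at least $\tau$ of its inputs equal 1; a threshold function is a $\tau$-threshold function for some $\tau\ge0$.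 A Boolean function is symmetric if its value depends only on the number of 1's among its inputs. *)

(* Defs.v *)
From mathcomp Require Import all_boot.
Set Implicit Arguments. Unset Strict Implicit. Unset Printing Implicit Defensive.

Definition config (n : nat) := {ffun 'I_n -> bool}.

Record MSyDS (n k : nat) := {
  layer  : 'I_k -> rel 'I_n;
  localf : 'I_k -> 'I_n -> config n -> bool;
  master : 'I_n -> {ffun 'I_k -> bool} -> bool
}.

Definition cnbhd n k (S : MSyDS n k) (i : 'I_k) (v : 'I_n) : {set 'I_n} :=
  [set u | (u == v) || layer S i v u].

Definition wf_MSyDS n k (S : MSyDS n k) : Prop :=
  (forall i, symmetric (layer S i) /\ irreflexive (layer S i)) /\
  (forall i v (C C' : config n),
      (forall u, u \in cnbhd S i v -> C u = C' u) ->
      localf S i v C = localf S i v C').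

Definition is_threshold_local n k (S : MSyDS n k) (i : 'I_k) (v : 'I_n) : Prop :=
  exists tau : nat, forall C : config n,
    localf S i v C = (tau <= #|[set u in cnbhd S i v | C u]|).

Definition symmetric_bool k (psi : {ffun 'I_k -> bool} -> bool) : Prop :=
  forall x y : {ffun 'I_k -> bool},
    #|[set j | x j]| = #|[set j | y j]| -> psi x = psi y.

Definition successor n k (S : MSyDS n k) (C : config n) : config n :=
  [ffun v => master S v [ffun i => localf S i v C]].

Definition on_cycle n k (S : MSyDS n k) (C : config n) : Prop :=
  exists m, 0 < m /\ iter m (successor S) C = C.

(* Main.v *)
Require Import Defs.
From mathcomp Require Import all_boot.

Lemma card_lt n k : k <= n -> #|[set v : 'I_n | v < k]| = k.
Proof.
move=> kn.
have -> : [set v : 'I_n | v < k] = widen_ord kn @: [set: 'I_k].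
  apply/setP => v; rewrite !inE; apply/idP/imsetP => [vk|[w _ ->]]; last by case: w.
  by exists (Ordinal vk) => //; apply: val_inj.
by rewrite card_imset ?cardsT ?card_ord //; by move=> a b /(congr1 val) /= /val_inj.
Qed.

Lemma card2 (x : {ffun 'I_2 -> bool}) : #|[set j | x j]| = x ord0 + x (lift ord0 ord0).
Proof.
rewrite -sum1_card big_mkcond /= big_ord_recl big_ord_recl big_ord0 !inE.
by case: (x ord0); case: (x _).
Qed.

Definition cnt (n : nat) (C : config n) := #|[set u | C u]|.
Definition tau n (i : 'I_2) (v : 'I_n) : nat := if val i == 0 then val v else n.
Arguments cnt : clear implicits.

Definition Sys n : MSyDS n 2 :=
  {| layer := fun _ u w => u != w;
     localf := fun i v C => @tau n i v <= cnt n C;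
     master := fun _ x => x ord0 != x (lift ord0 ord0) |}.

Definition h (n j : nat) : config n := [ffun v : 'I_n => v < j].

Lemma cnt_h n j : j <= n -> cnt n (h n j) = j.
Proof.
move=> jn; rewrite /cnt -{2}(@card_lt n j jn); apply: eq_card => v; by rewrite !inE ffunE.
Qed.

Lemma succE n (C : config n) :
  successor (Sys n) C = if cnt n C < n then h n (cnt n C).+1 else h n 0.
Proof.
apply/ffunP => v; rewrite !ffunE /= /tau /=.
have vn := ltn_ord v.
case: ltnP => c; rewrite !ffunE /=.
  by rewrite (leqNgt n (cnt n C)) c /=; change (v < (cnt n C).+1) with (v <= cnt n C); case: (v <= cnt n C).
by rewrite c (leq_trans (ltnW vn) c).
Qed.

Lemma cnt_le n (C : config n) : cnt n C <= n.
Proof. by rewrite /cnt; apply: leq_trans (max_card _) _; rewrite card_ord. Qed.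

Lemma iter_h n j : j <= n -> iter j (successor (Sys n)) (h n 0) = h n j.
Proof.
elim: j => [//|j IH] jn /=.
by rewrite IH ?(ltnW jn) // succE cnt_h ?(ltnW jn) // jn.
Qed.

Theorem theorem3p1 : forall n : nat, 0 < n ->
  exists S : MSyDS n 2,
    wf_MSyDS S /\
    (forall i v, is_threshold_local S i v) /\
    (forall v, symmetric_bool (master S v)) /\
    exists C0 : config n,
      (* C0 lies on a cycle of length exactly n+1 *)
      iter n.+1 (successor S) C0 = C0 /\
      (forall m, 0 < m < n.+1 -> iter m (successor S) C0 <> C0) /\
      (* this is the only cycle *)
      (forall C, on_cycle S C -> exists j, C = iter j (successor S) C0) /\
      (* every transient has length one: each successor lies on the cycle *)
      (forall C, exists j, successor S C = iter j (successor S) C0).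
Proof.
move=> n n0; exists (Sys n).
have cnbT : forall i v u, u \in cnbhd (Sys n) i v.
  by move=> i v u; rewrite inE /= eq_sym orbN.
have trans : forall C, exists j, successor (Sys n) C = iter j (successor (Sys n)) (h n 0).
  move=> C; rewrite succE; case: ifP => c.
    by exists (cnt n C).+1; rewrite iter_h.
  by exists 0.
split; [split|split; [|split]].
- by move=> i; split => [x y|x] /=; rewrite ?eqxx // eq_sym.
- move=> i v C C' e; have -> // : C = C'.
  by apply/ffunP => u; apply: e.
- move=> i v; exists (@tau n i v) => C /=; congr (_ <= _); rewrite /cnt; apply: eq_card => u.
  by rewrite !inE /= eq_sym orbN.
- move=> v x y /=; rewrite !card2 => e.
  by move: e; case: (x ord0); case: (x _); case: (y ord0); case: (y _).
exists (h n 0); split; [|split; [|split]] => //.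
- by rewrite iterS iter_h // succE cnt_h // ltnn.
- move=> m /andP [m0 mn] e; move: (congr1 (cnt n) e).
  by rewrite iter_h // !cnt_h // => m0'; rewrite m0' in m0.
- move=> C [m [m0 e]]; rewrite -e -(prednK m0) iterS; exact: trans.
Qed.
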